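(* Let $A\in\mathbb{R}^{n\times n}$, $\bm{g}\in\mathbb{R}^n$, and let $\bm{y}$ be a solution of $\bm{y}''(t)=-A\bm{y}(t)+\bm{g}$ on $\mathbb{R}$. Then for all $t\in\mathbb{R}$ and $\delta>0$, $$\bm{y}(t+\delta)-2\bm{y}(t)+\bm{y}(t-\delta)=\delta^2\psi(\delta^2A)\big(-A\bm{y}(t)+\bm{g}\big).$$ Consequently, for $\bm{y}$ with $\bm{y}(0)=\bm{u}$, $\bm{y}'(0)=\bm{v}$, the one-step scheme $\bm{y}_0=\bm{u}$, $\bm{v}_0=\sigma(\delta^2A)\bm{v}$, $\bm{v}_{k+1/2}=\bm{v}_k+\tfrac12\delta\psi(\delta^2A)(-A\bm{y}_k+\bm{g})$, $\bm{y}_{k+1}=\bm{y}_k+\delta\bm{v}_{k+1/2}$, $\bm{v}_{k+1}=\bm{v}_{k+1/2}+\tfrac12\delta\psi(\delta^2A)(-A\bm{y}_{k+1}+\bm{g})$ produces $\bm{y}_k=\bm{y}(k\delta)$ for all $k\ge0$.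
   Context: $\psi$ and $\sigma$ are the entire functions determined by $\psi(x^2)=2(1-\cos x)/x^2$ and $\sigma(x^2)=\sin(x)/x$ (with $\psi(0)=\sigma(0)=1$); matrix functions are defined via their power series. *)

(* Defs.v *)
From HB Require Import structures.
From mathcomp Require Import all_boot all_order all_algebra.
From mathcomp Require Import all_classical all_reals all_analysis.
Set Implicit Arguments. Unset Strict Implicit. Unset Printing Implicit Defensive.
Import Order.TTheory GRing.Theory Num.Theory.
Import numFieldNormedType.Exports.
Local Open Scope ring_scope.

Section Defs.
Variable R : realType.

(* psi(z) = sum_k 2 (-1)^k z^k / (2k+2)!   (so psi(x^2) = 2(1 - cos x)/x^2) *)
Definition psi_coef (k : nat) : R := (-1) ^+ k * 2 / ((2 * k + 2)`!)%:R.
(* sigma(z) = sum_k (-1)^k z^k / (2k+1)!   (so sigma(x^2) = sin x / x) *)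
Definition sigma_coef (k : nat) : R := (-1) ^+ k / ((2 * k + 1)`!)%:R.

Definition psiM n (X : 'M[R]_n) : 'M[R]_n :=
  limn (series (fun k => psi_coef k *: X ^+ k)).
Definition sigmaM n (X : 'M[R]_n) : 'M[R]_n :=
  limn (series (fun k => sigma_coef k *: X ^+ k)).

Definition is_solution n (A : 'M[R]_n) (g : 'cV[R]_n) (y : R -> 'cV[R]_n) :=
  (forall t, derivable y t 1) /\
  (forall t, derivable (y^`())%classic t 1) /\
  (forall t, (y^`()^`())%classic t = - (A *m y t) + g).

Definition scheme_step n (A : 'M[R]_n) (g : 'cV[R]_n) (d : R)
  (p : 'cV[R]_n * 'cV[R]_n) : 'cV[R]_n * 'cV[R]_n :=
  let P := psiM (d ^+ 2 *: A) in
  let vh := p.2 + (2^-1 * d) *: (P *m (- (A *m p.1) + g)) in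
  let y1 := p.1 + d *: vh in
  (y1, vh + (2^-1 * d) *: (P *m (- (A *m y1) + g))).

Fixpoint scheme n (A : 'M[R]_n) (g : 'cV[R]_n) (d : R) (u v : 'cV[R]_n)
  (k : nat) : 'cV[R]_n * 'cV[R]_n :=
  match k with
  | 0 => (u, sigmaM (d ^+ 2 *: A) *m v)
  | k'.+1 => scheme_step A g d (scheme A g d u v k')
  end.
End Defs.

(* Main.v *)
Require Import Defs.
From HB Require Import structures.
From mathcomp Require Import all_boot all_order all_algebra.
From mathcomp Require Import all_classical all_reals all_analysis.
From mathcomp Require Import ring lra zify.
Import Order.TTheory GRing.Theory Num.Theory.
Import numFieldNormedType.Exports.
Local Open Scope ring_scope.

Module Aux.
Set Implicit Arguments. Unset Strict Implicit. Unset Printing Implicit Defensive.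
Local Open Scope classical_set_scope.
Section Scal.
Variable R : realType.

Definition egf (m : nat -> R) (x : R) : R :=
  limn (pseries (fun j => m j / (j`!)%:R) x).

Lemma egf_cvg (m : nat -> R) (b K x : R) :
  (forall j, `|m j| <= b * K ^+ j) ->
  cvgn (pseries (fun j => m j / (j`!)%:R) x).
Proof.
move=> hb; apply: normed_cvg; rewrite /normed_series_of /=.
apply: (@series_le_cvg _ _ (fun j => `|b| * exp_coeff (`|K| * `|x|) j)).
- by move=> j.
- by move=> j; rewrite mulr_ge0 // exp_coeff_ge0 // mulr_ge0.
- move=> j /=; rewrite /exp_coeff /= normrM normrM normfV normrX.
  rewrite [`|(j`!)%:R|]ger0_norm // exprMn.
  have -> : `|b| * (`|K| ^+ j * `|x| ^+ j / (j`!)%:R) =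
     (`|b| * `|K| ^+ j) * ((j`!)%:R)^-1 * `|x| ^+ j by ring.
  apply: ler_pM; rewrite ?mulr_ge0 ?invr_ge0 ?exprn_ge0 //.
  apply: ler_pM; rewrite ?mulr_ge0 ?invr_ge0 ?exprn_ge0 //.
  apply: (le_trans (hb j)); rewrite (le_trans (ler_norm _)) // normrM normrX //.
- exact/is_cvg_seriesZ/is_cvg_series_exp_coeff.
Qed.


Lemma diffs_egf (m : nat -> R) :
  pseries_diffs (fun j => m j / (j`!)%:R) = (fun j => m j.+1 / (j`!)%:R).
Proof.
apply/funext => j; rewrite /pseries_diffs factS natrM.
have h1 : (j.+1%:R : R) != 0 by rewrite pnatr_eq0.
have h2 : ((j`!)%:R : R) != 0 by rewrite pnatr_eq0 -lt0n fact_gt0.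
by rewrite invfM mulrCA [X in _ * X]mulrA mulfV // mul1r.
Qed.

Lemma egf_derive (m : nat -> R) (b K x : R) :
  (forall j, `|m j| <= b * K ^+ j) ->
  is_derive x (1 : R) (egf m) (egf (fun j => m j.+1) x).
Proof.
move=> hb.
have hb1 : forall j, `|m j.+1| <= (b * K) * K ^+ j.
  by move=> j; rewrite -mulrA -exprS.
have hb2 : forall j, `|m j.+2| <= (b * K * K) * K ^+ j.
  by move=> j; rewrite -!mulrA -!exprS.
have := @pseries_snd_diffs R (fun j => m j / (j`!)%:R) (`|x| + 1) x.
rewrite !diffs_egf; apply.
- exact: egf_cvg hb.
- exact: egf_cvg hb1.
- exact: egf_cvg hb2.
- by rewrite [X in _ < X]ger0_norm ?ltrDl // addr_ge0.
Qed.

Lemma lim_series_single (u : nat -> R) :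
  (forall j, (0 < j)%N -> u j = 0) -> limn (series u) = u 0%N.
Proof.
move=> hu; apply: cvg_lim => //.
rewrite -cvg_shiftS; apply: cvg_near_cst; apply: nearW => N /=.
rewrite /series /= big_nat_recl // big1_seq ?addr0 // => k /andP[_].
by rewrite mem_index_iota => /andP[_ _]; apply: hu.
Qed.


Definition sbnd (m : nat -> R) := exists b K : R, forall j, `|m j| <= b * K ^+ j.

Lemma egf_cvgB m x : sbnd m -> cvgn (pseries (fun j => m j / (j`!)%:R) x).
Proof. by case=> b [K hb]; exact: egf_cvg hb. Qed.

Lemma egf_scale (a : R) m x : sbnd m ->
  egf (fun j => a * m j) x = a * egf m x.
Proof.
move=> hm; rewrite /egf.
have -> : pseries (fun j => a * m j / (j`!)%:R) x =
          (fun N => a * pseries (fun j => m j / (j`!)%:R) x N).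
  apply/funext => N; rewrite /pseries /series /= mulr_sumr.
  by apply: eq_bigr => k _; rewrite !mulrA.
apply: cvg_lim => //; apply: cvgMl_tmp; exact: egf_cvgB.
Qed.

Lemma cvg_fsum (I : finType) (u : I -> nat -> R) (l : I -> R) :
  (forall i, u i @ \oo --> l i) -> (\sum_i u i) @ \oo --> \sum_i l i.
Proof.
move=> hu; elim/big_ind2: _ => //.
- exact: cvg_cst.
- by move=> ? ? ? ? h1 h2; exact: cvgD h1 h2.
Qed.

Lemma egf_sum (I : finType) (f : I -> nat -> R) x :
  (forall i, sbnd (f i)) ->
  egf (fun j => \sum_i f i j) x = \sum_i egf (f i) x.
Proof.
move=> hf; rewrite /egf.
have -> : pseries (fun j => (\sum_i f i j) / (j`!)%:R) x =
          \sum_i pseries (fun j => f i j / (j`!)%:R) x.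
  apply/funext => N; rewrite fct_sumE /pseries /series /= exchange_big /=.
  by apply: eq_bigr => k _; rewrite !mulr_suml.
apply: cvg_lim => //; apply: cvg_fsum => i; exact: egf_cvgB.
Qed.

End Scal.

Section Mx.
Variable R : realType.

Definition Em p q (m : nat -> 'M[R]_(p,q)) (x : R) : 'M[R]_(p,q) :=
  \matrix_(i, l) egf (fun j => m j i l) x.

Definition mbnd p q (m : nat -> 'M[R]_(p,q)) :=
  exists b K : R, [/\ 0 <= b, 0 <= K & forall j i l, `|m j i l| <= b * K ^+ j].

Lemma mbnd_entry p q (m : nat -> 'M[R]_(p,q)) i l :
  mbnd m -> sbnd (fun j => m j i l).
Proof. by case=> b [K [_ _ h]]; exists b, K => j; exact: h. Qed.

Lemma mbnd_S p q (m : nat -> 'M[R]_(p,q)) : mbnd m -> mbnd (fun j => m j.+1).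
Proof.
case=> b [K [b0 K0 h]]; exists (b * K), K; split; rewrite ?mulr_ge0 //.
by move=> j i l; rewrite -mulrA -exprS.
Qed.

Lemma row_le_sum p q (P : 'M[R]_(p,q)) i :
  \sum_k `|P i k| <= \sum_i' \sum_k `|P i' k|.
Proof.
rewrite (bigD1 i) //= lerDl sumr_ge0 // => i' _; exact: sumr_ge0.
Qed.

Lemma col_le_sum p q (P : 'M[R]_(p,q)) l :
  \sum_k `|P k l| <= \sum_i' \sum_k `|P k i'|.
Proof.
rewrite (bigD1 l) //= lerDl sumr_ge0 // => i' _; exact: sumr_ge0.
Qed.

Lemma mbnd_mull r p q (P : 'M[R]_(r,p)) (m : nat -> 'M[R]_(p,q)) :
  mbnd m -> mbnd (fun j => P *m m j).
Proof.
case=> b [K [b0 K0 h]].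
exists ((\sum_i' \sum_k `|P i' k|) * b), K; split.
- by rewrite mulr_ge0 // sumr_ge0 // => i' _; rewrite sumr_ge0.
- by [].
move=> j i l; rewrite mxE (le_trans (ler_norm_sum _ _ _)) //.
apply: (@le_trans _ _ (\sum_k `|P i k| * (b * K ^+ j))).
  by apply: ler_sum => k _; rewrite normrM ler_wpM2l.
rewrite -mulr_suml -mulrA ler_wpM2r ?mulr_ge0 ?exprn_ge0 //.
exact: row_le_sum.
Qed.

Lemma mbnd_mulr r p q (P : 'M[R]_(q,r)) (m : nat -> 'M[R]_(p,q)) :
  mbnd m -> mbnd (fun j => m j *m P).
Proof.
case=> b [K [b0 K0 h]].
exists ((\sum_i' \sum_k `|P k i'|) * b), K; split.
- by rewrite mulr_ge0 // sumr_ge0 // => i' _; rewrite sumr_ge0.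
- by [].
move=> j i l; rewrite mxE (le_trans (ler_norm_sum _ _ _)) //.
apply: (@le_trans _ _ (\sum_k `|P k l| * (b * K ^+ j))).
  by apply: ler_sum => k _; rewrite normrM mulrC ler_wpM2l.
rewrite -mulr_suml -mulrA ler_wpM2r ?mulr_ge0 ?exprn_ge0 //.
exact: col_le_sum.
Qed.

Lemma Em_derive p q (m : nat -> 'M[R]_(p,q)) x : mbnd m ->
  derivable (Em m) x 1 /\ 'D_1 (Em m) x = Em (fun j => m j.+1) x.
Proof.
move=> hm.
have E : forall i l, (fun t => Em m t i l) = egf (fun j => m j i l).
  by move=> i l; apply/funext => t; rewrite mxE.
have D : forall i l, is_derive x (1 : R) (fun t => Em m t i l)
                        (egf (fun j => m j.+1 i l) x).
  move=> i l; rewrite E; case: (mbnd_entry i l hm) => b [K hb].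
  exact: egf_derive hb.
have dv : derivable (Em m) x 1.
  by apply/derivable_mxP => i l; case: (D i l).
split => //; rewrite derive_mx //; apply/matrixP => i l; rewrite !mxE.
by case: (D i l).
Qed.

Lemma Em_mull r p q (P : 'M[R]_(r,p)) (m : nat -> 'M[R]_(p,q)) x :
  mbnd m -> Em (fun j => P *m m j) x = P *m Em m x.
Proof.
move=> hm; apply/matrixP => i l; rewrite !mxE.
under eq_fun do rewrite mxE.
rewrite egf_sum; last first.
  move=> k; case: (mbnd_entry k l hm) => b [K hb].
  by exists (`|P i k| * b), K => j; rewrite normrM -mulrA ler_wpM2l.
apply: eq_bigr => k _; rewrite mxE egf_scale //; exact: mbnd_entry.
Qed.

Lemma Em_mulr r p q (P : 'M[R]_(q,r)) (m : nat -> 'M[R]_(p,q)) x :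
  mbnd m -> Em (fun j => m j *m P) x = Em m x *m P.
Proof.
move=> hm; apply/matrixP => i l; rewrite !mxE.
under eq_fun do rewrite mxE.
rewrite egf_sum; last first.
  move=> k; case: (mbnd_entry i k hm) => b [K hb].
  by exists (`|P k l| * b), K => j; rewrite normrM mulrC -mulrA ler_wpM2l.
apply: eq_bigr => k _; rewrite mxE.
under eq_fun do rewrite mulrC.
rewrite egf_scale; [by rewrite mulrC | exact: mbnd_entry].
Qed.

Lemma Em_single p q (m : nat -> 'M[R]_(p,q)) x :
  (forall j, (0 < j)%N -> m j = 0) -> Em m x = m 0%N.
Proof.
move=> hm; apply/matrixP => i l; rewrite !mxE /egf /pseries.
rewrite lim_series_single /=; first by rewrite expr0 mulr1 fact0 divr1.
by move=> j j0; rewrite hm // mxE mul0r mul0r.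
Qed.

Lemma Em_at0 p q (m : nat -> 'M[R]_(p,q)) : Em m 0 = m 0%N.
Proof.
apply/matrixP => i l; rewrite !mxE /egf /pseries.
rewrite lim_series_single /=; first by rewrite expr0 mulr1 fact0 divr1.
by move=> j j0; rewrite expr0n /= eqn0Ngt j0 mulr0.
Qed.

End Mx.

Section Calc.
Variable R : realType.

Lemma mulmx_derive p q r (F : R -> 'M[R]_(p,q)) (G : R -> 'M[R]_(q,r)) x :
  derivable F x 1 -> derivable G x 1 ->
  derivable (fun s => F s *m G s) x 1 /\
  'D_1 (fun s => F s *m G s) x = 'D_1 F x *m G x + F x *m 'D_1 G x.
Proof.
move=> dF dG.
have dFe := (derivable_mxP F x 1).1 dF.
have dGe := (derivable_mxP G x 1).1 dG.
have E : forall i l, (fun s => (F s *m G s) i l) =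
    \sum_(k < q) ((fun s => F s i k) * (fun s => G s k l)).
  by move=> i l; apply/funext => s; rewrite mxE fct_sumE.
have D : forall i l, derivable (fun s => (F s *m G s) i l) x 1 /\
    'D_1 (fun s => (F s *m G s) i l) x =
    \sum_k ('D_1 (fun s => F s i k) x * G x k l +
            F x i k * 'D_1 (fun s => G s k l) x).
  move=> i l; rewrite E; split.
    by apply: derivable_sum => k; apply: derivableM.
  rewrite derive_sum; last by move=> k; apply: derivableM.
  apply: eq_bigr => k _; rewrite deriveM //=.
  by rewrite addrC; congr (_ + _); exact: mulrC.
have dP : derivable (fun s => F s *m G s) x 1.
  by apply/derivable_mxP => i l; case: (D i l).
split => //; rewrite derive_mx //; apply/matrixP => i l; rewrite !mxE.
case: (D i l) => _ ->; rewrite big_split /=.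
rewrite (derive_mx dF) (derive_mx dG).
by congr (_ + _); apply: eq_bigr => k _; rewrite !mxE.
Qed.

Lemma mx_cst p q (F : R -> 'M[R]_(p,q)) :
  (forall x, derivable F x 1) -> (forall x, 'D_1 F x = 0) ->
  forall x y, F x = F y.
Proof.
move=> dF zF x y; apply/matrixP => i l.
apply: (@is_derive_0_is_cst _ (fun s => F s i l)) => s.
apply: DeriveDef; first exact: ((derivable_mxP F s 1).1 (dF s) i l).
have := derive_mx (dF s); rewrite zF => /matrixP /(_ i l).
by rewrite !mxE => <-.
Qed.

Lemma shift_fun (V : normedModType R) (f : R -> V) (t a v : R) :
  (fun h : R => h^-1 *: (((fun s => f (t + s)) \o shift a) (h *: v)
       - (fun s => f (t + s)) a)) =
  (fun h : R => h^-1 *: ((f \o shift (t + a)) (h *: v) - f (t + a))).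
Proof. by apply/funext => h /=; rewrite addrCA. Qed.

Lemma derivable_shiftl (V : normedModType R) (f : R -> V) (t a v : R) :
  derivable f (t + a) v -> derivable (fun s => f (t + s)) a v.
Proof. by rewrite /derivable shift_fun. Qed.

Lemma derive_shiftl (V : normedModType R) (f : R -> V) (t a v : R) :
  'D_v (fun s => f (t + s)) a = 'D_v f (t + a).
Proof. by rewrite /derive shift_fun. Qed.

End Calc.

Section Seqs.
Variable R : realType.
Variable n : nat.
Variable B : 'M[R]_n.

Lemma pow_bnd : exists K : R, 1 <= K /\ forall k i l, `|(B ^+ k) i l| <= K ^+ k.
Proof.
set a := \sum_i \sum_k `|B i k|.
have a0 : 0 <= a by rewrite sumr_ge0 // => i _; rewrite sumr_ge0.
exists (1 + a); split; first by rewrite lerDl.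
elim=> [|k IH] i l.
  rewrite expr0 !mxE expr0; case: (i == l); rewrite ?normr1 ?normr0 //.
rewrite exprS -mulmxE mxE (le_trans (ler_norm_sum _ _ _)) //.
apply: (@le_trans _ _ (\sum_p `|B i p| * (1 + a) ^+ k)).
  by apply: ler_sum => p _; rewrite normrM ler_wpM2l.
rewrite -mulr_suml exprS ler_wpM2r ?exprn_ge0 ?addr_ge0 //.
by rewrite (le_trans (row_le_sum B i)) // lerDr.
Qed.

Lemma mbnd_pat (m : nat -> 'M[R]_n) (f : nat -> nat) :
  (forall j, f j <= j)%N -> (forall j, m j = 0 \/ m j = B ^+ f j) -> mbnd m.
Proof.
move=> hf hm; case: pow_bnd => K [K1 hK].
exists 1, K; split; rewrite ?(le_trans ler01 K1) //.
move=> j i l; rewrite mul1r; case: (hm j) => ->.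
  by rewrite mxE normr0 exprn_ge0 // (le_trans ler01 K1).
apply: (le_trans (hK _ i l)).
rewrite -[X in _ <= K ^+ X](subnK (hf j)) exprD ler_peMl ?exprn_ge0 ?(le_trans ler01 K1) //.
exact: exprn_ege1.
Qed.

Definition mC (j : nat) : 'M[R]_n := if odd j then 0 else B ^+ j./2.
Definition mS (j : nat) : 'M[R]_n := if odd j then B ^+ j./2 else 0.
Definition mH (j : nat) : 'M[R]_n := if odd j || (j == 0%N) then 0 else B ^+ j./2.-1.

Lemma half_le j : (j./2 <= j)%N.
Proof. by rewrite leq_half_double -addnn; lia. Qed.

Lemma mbnd_C : mbnd mC.
Proof.
apply: (@mbnd_pat _ (fun j => j./2)) => [j|j]; first exact: half_le.
by rewrite /mC; case: ifP; [left|right].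
Qed.

Lemma mbnd_S0 : mbnd mS.
Proof.
apply: (@mbnd_pat _ (fun j => j./2)) => [j|j]; first exact: half_le.
by rewrite /mS; case: ifP; [right|left].
Qed.

Lemma mbnd_H : mbnd mH.
Proof.
apply: (@mbnd_pat _ (fun j => j./2.-1)) => [j|j].
  exact: leq_trans (leq_pred _) (half_le j).
by rewrite /mH; case: ifP; [left|right].
Qed.

Lemma mC_S j : mC j.+1 = B *m mS j.
Proof.
rewrite /mC /mS /=; case: (boolP (odd j)) => oj /=; last by rewrite mulmx0.
rewrite mulmxE -exprS; congr (_ ^+ _).
by rewrite uphalf_half oj.
Qed.

Lemma mS_C j : mS j.+1 = mC j.
Proof.
rewrite /mC /mS /=; case: (boolP (odd j)) => oj //=.
by rewrite uphalf_half (negbTE oj).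
Qed.

Lemma mH_S j : mH j.+1 = mS j.
Proof.
rewrite /mH /mS /= orbF; case: (boolP (odd j)) => oj //=.
by rewrite uphalf_half oj.
Qed.

Lemma mC0 : mC 0 = 1.
Proof. by rewrite /mC /= expr0. Qed.
Lemma mS0 : mS 0 = 0.
Proof. by []. Qed.
Lemma mH0 : mH 0 = 0.
Proof. by []. Qed.



Definition Cf (s : R) := Em mC s.
Definition Sf (s : R) := Em mS s.
Definition Hf (s : R) := Em mH s.

Lemma dC s : derivable Cf s 1 /\ 'D_1 Cf s = B *m Sf s.
Proof.
case: (Em_derive s mbnd_C) => d ->; split => //.
rewrite (_ : (fun j => mC j.+1) = fun j => B *m mS j); last first.
  by apply/funext => j; rewrite mC_S.
exact: Em_mull mbnd_S0.
Qed.

Lemma dS s : derivable Sf s 1 /\ 'D_1 Sf s = Cf s.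
Proof.
case: (Em_derive s mbnd_S0) => d ->; split => //.
by rewrite (_ : (fun j => mS j.+1) = mC) //; apply/funext => j; rewrite mS_C.
Qed.

Lemma dH s : derivable Hf s 1 /\ 'D_1 Hf s = Sf s.
Proof.
case: (Em_derive s mbnd_H) => d ->; split => //.
by rewrite (_ : (fun j => mH j.+1) = mS) //; apply/funext => j; rewrite mH_S.
Qed.

Definition Pat (m : nat -> 'M[R]_n) := forall j, m j = 0 \/ exists k, m j = B ^+ k.

Lemma PatC : Pat mC.
Proof. by move=> j; rewrite /mC; case: ifP => _; [left|right; exists j./2]. Qed.
Lemma PatS : Pat mS.
Proof. by move=> j; rewrite /mS; case: ifP => _; [right; exists j./2|left]. Qed.
Lemma PatH : Pat mH.
Proof. by move=> j; rewrite /mH; case: ifP => _; [left|right; exists j./2.-1]. Qed.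

Lemma pat_comm (X : 'M[R]_n) m : X *m B = B *m X -> Pat m ->
  forall j, X *m m j = m j *m X.
Proof.
move=> hX hm j; case: (hm j) => [->|[k ->]]; first by rewrite mulmx0 mul0mx.
rewrite !mulmxE; apply: commrX; by rewrite /GRing.comm -!mulmxE.
Qed.

Lemma Em_comm m (X : 'M[R]_n) s : mbnd m -> X *m B = B *m X -> Pat m ->
  X *m Em m s = Em m s *m X.
Proof.
move=> hb hX hm; rewrite -Em_mull // -Em_mulr //; congr Em.
by apply/funext => j; apply: pat_comm.
Qed.

Lemma Em_commB m s : mbnd m -> Pat m -> Em m s *m B = B *m Em m s.
Proof. by move=> hb hm; rewrite (Em_comm s hb) //. Qed.

Lemma Em_comm2 m1 m2 s t : mbnd m1 -> Pat m1 -> mbnd m2 -> Pat m2 ->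
  Em m1 s *m Em m2 t = Em m2 t *m Em m1 s.
Proof.
by move=> h1 p1 h2 p2; apply: Em_comm => //; exact: Em_commB.
Qed.

End Seqs.

Section Conn.
Variable R : realType.

Lemma cvg_mx_entries p q (u : nat -> 'M[R]_(p,q)) (L : 'M[R]_(p,q)) :
  (forall i l, (fun N => u N i l) @ \oo --> L i l) -> u @ \oo --> L.
Proof.
move=> h; apply/cvgrPdist_le => e e0.
near=> N.
rewrite /Num.Def.normr/= mx_normrE (bigmax_le _ (ltW e0))//= => il _.
rewrite !mxE /=; move: il; near: N; apply: filter_forall => -[i l] /=.
exact: ((cvgrPdist_le _ _).1 (h i l) e e0).
Unshelve. all: by end_near. Qed.

Lemma cvg_subseq (v : nat -> R) (l : R) (phi : nat -> nat) :
  phi @ \oo --> \oo -> v @ \oo --> l -> (v \o phi) @ \oo --> l.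
Proof. by move=> hp hv; exact: (cvg_comp _ _ hp hv). Qed.

Lemma cvg_double : (fun N => N.*2) @ \oo --> \oo.
Proof.
have -> : (fun N => N.*2) = (fun x => 2 * x)%N by apply/funext => N; rewrite mul2n.
exact: (@cvg_mulnl 2 isT).
Qed.

Lemma cvg_double1 : (fun N => N.*2.+1) @ \oo --> \oo.
Proof.
rewrite (_ : (fun N => N.*2.+1) = (fun x => x + 1)%N \o (fun N => N.*2)).
  exact: (cvg_comp _ _ cvg_double (cvg_addnr 1)).
by apply/funext => N /=; rewrite addn1.
Qed.


Variable n : nat.
Variable A : 'M[R]_n.

Lemma powB k : (- A) ^+ k = (-1) ^+ k *: A ^+ k.
Proof.
elim: k => [|k IH]; first by rewrite !expr0 scale1r.
by rewrite !exprS IH -!mulmxE -scalemxAr mulNmx mulN1r scaleNr scalerN.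
Qed.

Lemma powZ (c : R) (M : 'M[R]_n) k : (c *: M) ^+ k = c ^+ k *: M ^+ k.
Proof.
elim: k => [|k IH]; first by rewrite !expr0 scale1r.
by rewrite !exprS IH -!mulmxE -scalemxAr -scalemxAl scalerA [c ^+ k * c]mulrC.
Qed.

Lemma sum_mS (d : R) N i l :
  (d *: series (fun k => sigma_coef R k *: (d ^+ 2 *: A) ^+ k) N) i l =
  pseries (fun j => mS (- A) j i l / (j`!)%:R) d (N.*2).
Proof.
elim: N => [|N IH].
  by rewrite /pseries /series /= !big_geq // scaler0 mxE.
rewrite /pseries /series /= in IH *.
rewrite big_nat_recr //= scalerDr mxE IH doubleS !big_nat_recr //= -addrA.
congr (_ + _).
rewrite /mS /= odd_double /= uphalf_double powB powZ !mxE /sigma_coef.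
rewrite -!mul2n addn1 [d ^+ (2 * N).+1]exprS exprM; ring.
Qed.


Lemma sum_mH (d : R) N i l :
  (d ^+ 2 *: series (fun k => psi_coef R k *: (d ^+ 2 *: A) ^+ k) N) i l =
  2 * pseries (fun j => mH (- A) j i l / (j`!)%:R) d (N.*2.+1).
Proof.
elim: N => [|N IH].
  by rewrite /pseries /series /= big_geq // big_nat1 /= scaler0 !mxE !mul0r mulr0.
rewrite /pseries /series /= in IH *.
rewrite big_nat_recr //= scalerDr mxE IH doubleS.
rewrite [X in _ = 2 * X]big_nat_recr //= [X in _ = 2 * (X + _)]big_nat_recr //=.
rewrite -addrA mulrDr; congr (_ + _).
rewrite /mH /= odd_double /= doubleK powB powZ !mxE /psi_coef -!mul2n.
rewrite -[(2 * N).+2]addn2 exprD exprM; ring.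
Qed.


Lemma sig_conn (d : R) : d != 0 -> d *: sigmaM (d ^+ 2 *: A) = Sf (- A) d.
Proof.
move=> d0.
set U := series (fun k => sigma_coef R k *: (d ^+ 2 *: A) ^+ k).
have h1 : (fun N => d *: U N) @ \oo --> Sf (- A) d.
  apply: cvg_mx_entries => i l.
  rewrite (_ : (fun N => (d *: U N) i l) =
     (pseries (fun j => mS (- A) j i l / (j`!)%:R) d) \o (fun N => N.*2)); last first.
    by apply/funext => N; rewrite /= sum_mS.
  rewrite /Sf /Em mxE; apply: cvg_subseq cvg_double _.
  exact: egf_cvgB (mbnd_entry i l (mbnd_S0 (- A))).
have h2 : U @ \oo --> d^-1 *: Sf (- A) d.
  rewrite (_ : U = fun N => d^-1 *: (d *: U N)); last first.
    by apply/funext => N; rewrite scalerA mulVf // scale1r.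
  by apply: cvgZ => //; exact: cvg_cst.
by rewrite /sigmaM -/U (cvg_lim _ h2) // scalerA mulfV // scale1r.
Qed.

Lemma psi_conn (d : R) : d != 0 ->
  d ^+ 2 *: psiM (d ^+ 2 *: A) = 2 *: Hf (- A) d.
Proof.
move=> d0.
have d20 : d ^+ 2 != 0 by rewrite expf_neq0.
set U := series (fun k => psi_coef R k *: (d ^+ 2 *: A) ^+ k).
have h1 : (fun N => d ^+ 2 *: U N) @ \oo --> 2 *: Hf (- A) d.
  apply: cvg_mx_entries => i l.
  rewrite (_ : (fun N => (d ^+ 2 *: U N) i l) =
     (fun N => 2 * ((pseries (fun j => mH (- A) j i l / (j`!)%:R) d)
                     \o (fun N => N.*2.+1)) N)); last first.
    by apply/funext => N; rewrite /= sum_mH.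
  rewrite /Hf /Em !mxE; apply: cvgMl_tmp; apply: cvg_subseq cvg_double1 _.
  exact: egf_cvgB (mbnd_entry i l (mbnd_H (- A))).
have h2 : U @ \oo --> (d ^+ 2)^-1 *: (2 *: Hf (- A) d).
  rewrite (_ : U = fun N => (d ^+ 2)^-1 *: (d ^+ 2 *: U N)); last first.
    by apply/funext => N; rewrite scalerA mulVf // scale1r.
  by apply: cvgZ => //; exact: cvg_cst.
by rewrite /psiM -/U (cvg_lim _ h2) // scalerA mulfV // scale1r.
Qed.

End Conn.

Section Helpers.
Variable R : realType.

Lemma dD p q (f g : R -> 'M[R]_(p,q)) x : derivable f x 1 -> derivable g x 1 ->
  derivable (fun s => f s + g s) x 1 /\
  'D_1 (fun s => f s + g s) x = 'D_1 f x + 'D_1 g x.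
Proof. by move=> df dg; split; [exact: derivableD | exact: deriveD]. Qed.

Lemma dB p q (f g : R -> 'M[R]_(p,q)) x : derivable f x 1 -> derivable g x 1 ->
  derivable (fun s => f s - g s) x 1 /\
  'D_1 (fun s => f s - g s) x = 'D_1 f x - 'D_1 g x.
Proof. by move=> df dg; split; [exact: derivableB | exact: deriveB]. Qed.

Lemma dcl p q r (P : 'M[R]_(p,q)) (G : R -> 'M[R]_(q,r)) x : derivable G x 1 ->
  derivable (fun s => P *m G s) x 1 /\ 'D_1 (fun s => P *m G s) x = P *m 'D_1 G x.
Proof.
move=> dG; have := @mulmx_derive R _ _ _ (fun _ => P) G x (derivable_cst _ _ _) dG.
case=> d ->; split => //; rewrite (_ : 'D_1 (fun _ => P) x = 0) ?mul0mx ?add0r //.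
exact: derive_cst.
Qed.

Lemma dcr p q r (F : R -> 'M[R]_(p,q)) (P : 'M[R]_(q,r)) x : derivable F x 1 ->
  derivable (fun s => F s *m P) x 1 /\ 'D_1 (fun s => F s *m P) x = 'D_1 F x *m P.
Proof.
move=> dF; have := @mulmx_derive R _ _ _ F (fun _ => P) x dF (derivable_cst _ _ _).
case=> d ->; split => //; rewrite (_ : 'D_1 (fun _ => P) x = 0) ?mulmx0 ?addr0 //.
exact: derive_cst.
Qed.

Lemma Em_even n (m : nat -> 'M[R]_n) x :
  (forall j, odd j -> m j = 0) -> Em m (- x) = Em m x.
Proof.
move=> hm; apply/matrixP => i l; rewrite !mxE /egf.
rewrite (_ : pseries _ (- x) = pseries (fun j => m j i l / (j`!)%:R) x) //.
apply/funext => N; rewrite /pseries /series /=; apply: eq_bigr => j _.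
case: (boolP (odd j)) => oj; first by rewrite hm // mxE !mul0r.
by rewrite exprNn -signr_odd (negbTE oj) expr0 mul1r.
Qed.

Lemma Em_odd n (m : nat -> 'M[R]_n) x : mbnd m ->
  (forall j, ~~ odd j -> m j = 0) -> Em m (- x) = - Em m x.
Proof.
move=> hb hm; apply/matrixP => i l; rewrite !mxE /egf.
rewrite (_ : pseries _ (- x) = - pseries (fun j => m j i l / (j`!)%:R) x).
  by rewrite limN //; exact: egf_cvgB (mbnd_entry i l hb).
apply/funext => N; rewrite /pseries /series /=.
rewrite (_ : (- _) N = - \sum_(0 <= k < N) m k i l / (k`!)%:R * x ^+ k) //.
rewrite -sumrN; apply: eq_bigr => j _.
case: (boolP (odd j)) => oj; last by rewrite hm // mxE !mul0r oppr0.
by rewrite exprNn -signr_odd oj expr1 mulN1r mulrN.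
Qed.

End Helpers.

Lemma z1 (V : zmodType) (a b c : V) : a + (b + c) - (b + a) + - c = 0.
Proof. by rewrite [b + a]addrC addrA [a + b + c - _]addrAC subrr add0r subrr. Qed.
Lemma z2 (V : zmodType) (a b : V) : a + b - (b + a) = 0.
Proof. by rewrite [b + a]addrC subrr. Qed.
Lemma z3 (V : zmodType) (a b c : V) : a + (b + c) - (b + (c + a)) = 0.
Proof. by rewrite [c + a]addrC addrCA subrr. Qed.

Lemma z4 (U : zmodType) (z X Y W V : U) :
  z + X - Y + W + (Y - X - (V + W)) + V = z.
Proof.
rewrite !opprD !addrA [_ + W + Y]addrAC subrK [_ + W - X]addrAC addrK.
by rewrite [z + W - V]addrAC addrK subrK.
Qed.

Section Main.
Variable R : realType.
Variable n : nat.
Variable A : 'M[R]_n.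
Let B := - A.

Local Notation C := (Cf B).
Local Notation S := (Sf B).
Local Notation H := (Hf B).

Lemma C0 : C 0 = 1.
Proof. by rewrite /Cf Em_at0 mC0. Qed.
Lemma S0 : S 0 = 0.
Proof. by rewrite /Sf Em_at0. Qed.
Lemma H0 : H 0 = 0.
Proof. by rewrite /Hf Em_at0. Qed.

Lemma CN x : C (- x) = C x.
Proof. by apply: Em_even => j oj; rewrite /mC oj. Qed.
Lemma SN x : S (- x) = - S x.
Proof. by apply: Em_odd; [exact: mbnd_S0 | move=> j oj; rewrite /mS (negbTE oj)]. Qed.
Lemma HN x : H (- x) = H x.
Proof. by apply: Em_even => j oj; rewrite /mH oj. Qed.

Lemma CB x : C x *m B = B *m C x.
Proof. exact: Em_commB (mbnd_C B) (PatC B). Qed.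
Lemma SB x : S x *m B = B *m S x.
Proof. exact: Em_commB (mbnd_S0 B) (PatS B). Qed.
Lemma HB x : H x *m B = B *m H x.
Proof. exact: Em_commB (mbnd_H B) (PatH B). Qed.
Lemma CS x : C x *m S x = S x *m C x.
Proof. exact: Em_comm2 (mbnd_C B) (PatC B) (mbnd_S0 B) (PatS B). Qed.
Lemma CH x : C x *m H x = H x *m C x.
Proof. exact: Em_comm2 (mbnd_C B) (PatC B) (mbnd_H B) (PatH B). Qed.
Lemma SH x : S x *m H x = H x *m S x.
Proof. exact: Em_comm2 (mbnd_S0 B) (PatS B) (mbnd_H B) (PatH B). Qed.

Lemma I4 x : C x - B *m H x = 1.
Proof.
have D : forall s, derivable (fun s => C s - B *m H s) s 1 /\
   'D_1 (fun s => C s - B *m H s) s = 0.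
  move=> s; case: (dC B s) => dc ec; case: (dH B s) => dh eh.
  case: (dcl B dh) => dbh ebh.
  case: (dB dc dbh) => d e; split => //; rewrite e ec ebh eh subrr //.
rewrite (@mx_cst _ _ _ (fun s => C s - B *m H s) (fun s => (D s).1) (fun s => (D s).2) x 0).
by rewrite C0 H0 mulmx0 subr0.
Qed.


Variable g : 'cV[R]_n.
Variable y : R -> 'cV[R]_n.
Hypothesis HS : is_solution A g y.

Lemma Hz t s : derivable (fun s => y (t + s)) s 1 /\ 'D_1 (fun s => y (t + s)) s = derive1 y (t + s).
Proof.
case: HS => d1 [d2 e]; split; first exact: derivable_shiftl.
by rewrite derive_shiftl derive1E.
Qed.

Lemma Hz' t s : derivable (fun s => derive1 y (t + s)) s 1 /\ 'D_1 (fun s => derive1 y (t + s)) s = B *m y (t + s) + g.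
Proof.
case: HS => d1 [d2 e]; split; first exact: derivable_shiftl.
by rewrite derive_shiftl -derive1E e /B mulNmx.
Qed.

Lemma Q1 t s : C s *m y (t + s) - S s *m derive1 y (t + s) + H s *m g = y t.
Proof.
pose F s := C s *m y (t + s) - S s *m derive1 y (t + s) + H s *m g.
have D : forall s, derivable F s 1 /\ 'D_1 F s = 0.
  move=> s0.
  case: (dC B s0) => dc ec; case: (dS B s0) => ds es; case: (dH B s0) => dh eh.
  case: (Hz t s0) => dz ez; case: (Hz' t s0) => dz' ez'.
  case: (mulmx_derive dc dz) => d1 e1.
  case: (mulmx_derive ds dz') => d2 e2.
  case: (dcr g dh) => d3 e3.
  case: (dB d1 d2) => d4 e4. case: (dD d4 d3) => d5 e5.
  split; first exact: d5.
  rewrite /F e5 e4 e1 e2 e3 ec es eh ez ez' mulmxDr mulmxA -SB.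
  by rewrite !opprD !addrA addrK subrr add0r addNr.
change (F s = y t).
rewrite (@mx_cst _ _ _ F (fun s => (D s).1) (fun s => (D s).2) s 0) /F.
by rewrite C0 S0 H0 addr0 mul1mx !mul0mx subr0 addr0.
Qed.


Lemma Q2 t s : C s *m derive1 y (t + s) - (B *m S s) *m y (t + s) + S s *m (- g)
  = derive1 y t.
Proof.
pose F s := C s *m derive1 y (t + s) - (B *m S s) *m y (t + s) + S s *m (- g).
have D : forall s, derivable F s 1 /\ 'D_1 F s = 0.
  move=> s0.
  case: (dC B s0) => dc ec; case: (dS B s0) => ds es.
  case: (Hz t s0) => dz ez; case: (Hz' t s0) => dz' ez'.
  case: (dcl B ds) => dbs ebs.
  case: (mulmx_derive dc dz') => d1 e1.
  case: (mulmx_derive dbs dz) => d2 e2.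
  case: (dcr (- g) ds) => d3 e3.
  case: (dB d1 d2) => d4 e4. case: (dD d4 d3) => d5 e5.
  split; first exact: d5.
  rewrite /F e5 e4 e1 e2 e3 ebs ec es ez ez' mulmxDr mulmxA CB mulmxN.
  exact: z1.
change (F s = derive1 y t).
rewrite (@mx_cst _ _ _ F (fun s => (D s).1) (fun s => (D s).2) s 0) /F.
by rewrite C0 S0 addr0 mul1mx mulmx0 !mul0mx subr0 addr0.
Qed.

Lemma Q3 s : C s *m C s - (B *m S s) *m S s = 1.
Proof.
pose F s := C s *m C s - (B *m S s) *m S s.
have D : forall s, derivable F s 1 /\ 'D_1 F s = 0.
  move=> s0.
  case: (dC B s0) => dc ec; case: (dS B s0) => ds es.
  case: (dcl B ds) => dbs ebs.
  case: (mulmx_derive dc dc) => d1 e1.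
  case: (mulmx_derive dbs ds) => d2 e2.
  case: (dB d1 d2) => d4 e4.
  split; first exact: d4.
  rewrite /F e4 e1 e2 ebs ec es mulmxA CB.
  exact: z2.
change (F s = 1).
rewrite (@mx_cst _ _ _ F (fun s => (D s).1) (fun s => (D s).2) s 0) /F.
by rewrite C0 S0 mulmx0 ?mul0mx subr0 mulmxE mul1r.
Qed.

Lemma Q5 s : S s *m S s - (H s + C s *m H s) = 0.
Proof.
pose F s := S s *m S s - (H s + C s *m H s).
have D : forall s, derivable F s 1 /\ 'D_1 F s = 0.
  move=> s0.
  case: (dC B s0) => dc ec; case: (dS B s0) => ds es; case: (dH B s0) => dh eh.
  case: (mulmx_derive ds ds) => d1 e1.
  case: (mulmx_derive dc dh) => d2 e2.
  case: (dD dh d2) => d3 e3.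
  case: (dB d1 d3) => d4 e4.
  split; first exact: d4.
  rewrite /F e4 e1 e3 e2 ec es eh.
  have e : C s0 = 1%:M + B *m H s0 by have /eqP := I4 s0; rewrite subr_eq => /eqP.
  rewrite [in S s0 *m C s0]e mulmxDr mulmx1 mulmxA SB.
  exact: z3.
change (F s = 0).
rewrite (@mx_cst _ _ _ F (fun s => (D s).1) (fun s => (D s).2) s 0) /F.
by rewrite S0 H0 !mulmx0 addr0 subr0.
Qed.



Lemma KEY t s : y (t + s) = C s *m y t + S s *m derive1 y t + H s *m g.
Proof.
have e3 : C s *m C s = 1%:M + (B *m S s) *m S s.
  by have /eqP := Q3 s; rewrite subr_eq => /eqP.
have e5 : S s *m S s = H s + C s *m H s.
  by have /eqP := Q5 s; rewrite subr_eq0 => /eqP.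
rewrite -(Q1 t s) -(Q2 t s) !mulmxDr !mulmxN !mulmxA SB -CS e3 e5.
by rewrite !mulmxDl mul1mx z4.
Qed.

Lemma claim1 t d : 0 < d ->
  y (t + d) - 2 *: y t + y (t - d) =
  d ^+ 2 *: (psiM (d ^+ 2 *: A) *m (- (A *m y t) + g)).
Proof.
move=> d0.
have e4 : C d = 1%:M + B *m H d by have /eqP := I4 d; rewrite subr_eq => /eqP.
rewrite (KEY t d) (KEY t (- d)) CN SN HN scalemxAl psi_conn ?gt_eqF //.
rewrite -/B -scalemxAl -mulNmx -/B mulmxDr mulmxA HB mulNmx e4 mulmxDl mul1mx.
move: (B *m H d *m y t) (S d *m derive1 y t) (H d *m g) (y t) => Z b w u.
apply/matrixP => i j; rewrite !mxE; ring.
Qed.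


Lemma step2 d (p : 'cV[R]_n * 'cV[R]_n) :
  (scheme_step A g d (scheme_step A g d p)).1 =
  2 *: (scheme_step A g d p).1 - p.1 +
  d ^+ 2 *: (psiM (d ^+ 2 *: A) *m (- (A *m (scheme_step A g d p).1) + g)).
Proof.
case: p => y0 v0; rewrite /scheme_step /=.
set P := psiM (d ^+ 2 *: A).
set c0 := P *m (- (A *m y0) + g).
set y1 := y0 + d *: (v0 + (2^-1 * d) *: c0).
set c1 := P *m (- (A *m y1) + g).
clearbody c1; rewrite /y1; clearbody c0.
apply/matrixP => i j; rewrite !mxE.
by field.
Qed.


Lemma claim2 d u v : 0 < d -> y 0 = u -> derive1 y 0 = v ->
  forall k : nat, (scheme A g d u v k).1 = y (k%:R * d).
Proof.
move=> d0 yu yv.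
have dn0 : d != 0 by rewrite gt_eqF.
suff H2 : forall k, (scheme A g d u v k).1 = y (k%:R * d) /\
                    (scheme A g d u v k.+1).1 = y (k.+1%:R * d).
  by move=> k; case: (H2 k).
elim=> [|k [IH1 IH2]].
  split; first by rewrite /= mul0r yu.
  have -> : y (1%:R * d) = y (0 + d) by rewrite mul1r add0r.
  rewrite (KEY 0 d) yu yv /= /scheme_step /=.
  have e4 : C d = 1%:M + B *m H d by have /eqP := I4 d; rewrite subr_eq => /eqP.
  have eP : (d * (2^-1 * d)) *: psiM (d ^+ 2 *: A) = H d.
    rewrite (_ : d * (2^-1 * d) = 2^-1 * d ^+ 2); last by rewrite expr2; ring.
    by rewrite -scalerA psi_conn // scalerA mulVf ?scale1r // pnatr_eq0.
  rewrite scalerDr scalemxAl sig_conn // scalerA scalemxAl eP.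
  rewrite -mulNmx -/B mulmxDr e4 mulmxDl mul1mx mulmxA HB.
  move: (B *m H d *m u) (S d *m v) (H d *m g) => Z b w.
  by apply/matrixP => i j; rewrite !mxE; ring.
split => //.
have E1 : scheme_step A g d (scheme A g d u v k) = scheme A g d u v k.+1 := erefl.
have E2 : scheme A g d u v k.+2 = scheme_step A g d (scheme A g d u v k.+1) := erefl.
rewrite E2 -E1 step2 E1 IH1 IH2.
have := claim1 (k.+1%:R * d) d0.
have -> : k.+1%:R * d + d = k.+2%:R * d by rewrite -[k.+2]addn1 natrD mulrDl mul1r.
have -> : k.+1%:R * d - d = k%:R * d by rewrite -[k.+1]addn1 natrD mulrDl mul1r addrK.
move=> e; rewrite -e.
move: (y (k.+2%:R * d)) (y (k.+1%:R * d)) (y (k%:R * d)) => a b c.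
by apply/matrixP => i j; rewrite !mxE; ring.
Qed.

End Main.


End Aux.

Theorem mainTheorem7 (R : realType) (n : nat) (A : 'M[R]_n) (g : 'cV[R]_n)
  (y : R -> 'cV[R]_n) :
  is_solution A g y ->
  (forall (t d : R), 0 < d ->
     y (t + d) - 2 *: y t + y (t - d) =
     d ^+ 2 *: (psiM (d ^+ 2 *: A) *m (- (A *m y t) + g))) /\
  (forall (d : R) (u v : 'cV[R]_n), 0 < d ->
     y 0 = u -> (y^`())%classic 0 = v ->
     forall k : nat, (scheme A g d u v k).1 = y (k%:R * d)).
Proof.
move=> HS; split.
- by move=> t d d0; exact: (Aux.claim1 HS t d0).
- by move=> d u v d0 yu yv k; exact: (Aux.claim2 HS d0 yu yv k).
Qed.
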